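(* Let $(X,\le)$ be a partially ordered set, and for $x\in X$ let $K_x=\{y\in X: y\le x\}$. Let $\tau_\le$ be the topology on $X$ generated by the sets $K_x$ and $X\setminus K_x$, $x\in X$. The following are equivalent: (i) $(X,\tau_\le)$ is compact; (ii) $(X,\le)$ satisfies the descending chain condition (every decreasing sequence $x_1\ge x_2\ge\dots$ is eventually constant), there is a finite $F\subset X$ with $X=\bigcup_{x\in F}K_x$, and for any $x,y\in X$ there is a finite $F(x,y)\subset X$ with $K_x\cap K_y=\bigcup_{z\in F(x,y)}K_z$. *)

(* Defs.v *)
From HB Require Import structures.
From mathcomp Require Import all_boot all_order.
From mathcomp Require Import all_classical all_reals all_analysis.
Unset Printing Implicit Defensive.
Import Order.TTheory.
Local Open Scope classical_set_scope.
Local Open Scope order_scope.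

Definition Kdown {d : Order.disp_t} {X : porderType d} (x : X) : set X :=
  [set y | y <= x].

Definition le_subbase {d : Order.disp_t} (X : porderType d) : set (set X) :=
  [set A | exists x : X, A = Kdown x \/ A = ~` Kdown x].

(* X equipped with the topology tau_<= generated by the subbase above *)
Definition le_topology {d : Order.disp_t} (X : porderType d) : Type := X.

Section LeTopology.
Context {d : Order.disp_t} (X : porderType d).
HB.instance Definition _ := Choice.on (le_topology X).
HB.instance Definition _ :=
  @isSubBaseTopological.Build (le_topology X) (set X) (le_subbase X) idfun.
End LeTopology.

(* Main.v *)
Require Import Defs.
From HB Require Import structures.
From mathcomp Require Import all_boot all_order.
From mathcomp Require Import all_classical all_reals all_analysis.
From mathcomp Require Import finmap.
Import Order.TTheory.
Local Open Scope classical_set_scope.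
Local Open Scope order_scope.

Section S.
Context {d : Order.disp_t} (X : porderType d).
Let T := le_topology X.

Lemma sub_open (A : set X) : le_subbase X A -> @open T A.
Proof.
move=> sA; exists [set A]; last first.
  by rewrite predeqE => ?; split=> [[_ ->]|] //; exists A.
move=> _ ->; exists [fset A]%fset.
  by move=> ? ; rewrite inE => /eqP->; apply/mem_set.
rewrite predeqE=> x; split=> [|Ax i]; first by apply; rewrite /= inE.
by rewrite /= inE => /eqP ->.
Qed.

Lemma cvg_sub (F : set_system T) (p : T) : Filter F ->
  (forall A : set X, le_subbase X A -> A p -> F A) -> F --> p.
Proof.
move=> Ffilt H A /=; rewrite (@nbhsE T).
move=> [_ [[B sB <-] [C BC Ct] sUBA]].
rewrite nbhs_filterE; apply: filterS sUBA _; apply: (@filterS _ _ _ C).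
  by move=> ? ?; exists C.
have /sB [D sD IDeC] := BC; rewrite -IDeC; apply: filter_bigI => E DE.
have /sD := DE; move=> /set_mem Es.
by apply: H => //; move: Ct; rewrite -IDeC => /(_ _ DE).
Qed.

Lemma Kdown_open (x : X) : @open T (Kdown x).
Proof. by apply: sub_open; exists x; left. Qed.

Lemma Kdown_closed (x : X) : @closed T (Kdown x).
Proof.
rewrite -[Kdown x]setCK; apply: open_closedC; apply: sub_open.
by exists x; right.
Qed.

Definition ptop (x0 : X) : Type := le_topology X.
HB.instance Definition _ x0 := Topological.on (ptop x0).
HB.instance Definition _ x0 := isPointed.Build (ptop x0) x0.

Lemma compact_down (C : set T) : compact C ->
  (forall z w : X, C z -> w <= z -> C w) ->
  exists F : seq X, C = \bigcup_(z in [set` F]) Kdown z.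
Proof.
move=> Cc0 Cdown.
have [[x0 Cx0]|C0] := pselect (C !=set0); last first.
  exists [::]; rewrite predeqE => y; split=> [Cy|[z]//].
  by exfalso; apply: C0; exists y.
have Cc : @cover_compact (ptop x0) C by rewrite -compact_cover.
have [D' sD' CD'] := Cc X C Kdown (fun i _ => Kdown_open i)
  (fun z Cz => ex_intro2 _ _ z Cz (lexx z)).
exists D'; rewrite eqEsubset; split.
  by move=> y /CD' [z Dz Kz]; exists z.
move=> y [z Dz Kz]; apply: Cdown Kz; by have := sD' z Dz; move/set_mem.
Qed.

Lemma decr_le (u : nat -> X) : (forall n, u n.+1 <= u n) ->
  forall k n, (k <= n)%N -> u n <= u k.
Proof.
move=> du k; elim=> [|n IH]; first by rewrite leqn0 => /eqP ->.
rewrite leq_eqVlt => /orP [/eqP ->//|]; rewrite ltnS => /IH.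
exact: le_trans (du n).
Qed.

Lemma nbhs_sub (A : set X) (p : T) : le_subbase X A -> A p -> nbhs p A.
Proof.
move=> sA Ap; rewrite nbhsE; exists A => //; split => //; exact: sub_open.
Qed.

Lemma compact_dcc : compact [set: T] ->
  forall u : nat -> X, (forall n, u n.+1 <= u n) ->
         exists N, forall n, (N <= n)%N -> u n = u N.
Proof.
move=> Hc u du.
have [p [_ clp]] := Hc (fmap (u : nat -> T) \oo) _ filterT.
have Fr : (fmap (u : nat -> T) \oo) (range u).
  by exists 0%N => // n _ /=; exists n.
have [allp|] := pselect (forall n, p <= u n).
  have [_ [[k _ <-] Kk]] := clp (range u) (Kdown p)
    Fr
    (@nbhs_sub (Kdown p) p (ex_intro _ p (or_introl erefl)) (lexx p)).
  exists k => n kn; apply/eqP; rewrite eq_le decr_le //=.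
  exact: le_trans Kk (allp n).
move=> /existsNP [m pm].
have Fm : (fmap (u : nat -> T) \oo) (u @` [set k | (m <= k)%N]).
  by exists m => // n mn /=; exists n.
have [_ [[k /= mk <-] Kk]] := clp (u @` [set k | (m <= k)%N]) (~` Kdown (u m))
    Fm (@nbhs_sub _ p (ex_intro _ (u m) (or_intror erefl)) pm).
by exfalso; apply: Kk; exact: decr_le.
Qed.

Lemma ultra_seq (F : set_system T) : UltraFilter F -> forall s : seq X,
  F (\bigcup_(z in [set` s]) Kdown z) -> exists2 z, z \in s & F (Kdown z).
Proof.
move=> UF s Fs; apply: contrapT => Hn.
have : F (~` \bigcup_(z in [set` s]) Kdown z)%classic.
  elim: s {Fs} Hn => [|a s IH] Hn.
    by apply: filterS filterT => y _ [z].
  have Fa : F (~` Kdown a)%classic.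
    have [Fa|//] := @in_ultra_setVsetC _ F (Kdown a) UF.
    by exfalso; apply: Hn; exists a => //; rewrite mem_head.
  have Fs' : F (~` \bigcup_(z in [set` s]) Kdown z)%classic.
    by apply: IH => -[z zs Fz]; apply: Hn; exists z => //; rewrite in_cons zs orbT.
  apply: filterS (filterI Fa Fs') => y [nKa nU] [z /= zin Kz].
  move: zin; rewrite in_cons => /orP [/eqP ez|zs].
    by apply: nKa; rewrite -ez.
  by apply: nU; exists z.
move=> Fn; have [y [Ay nAy]] := filter_ex (filterI Fs Fn).
exact: nAy.
Qed.

Lemma dcc_min (S : set X) (x0 : X) :
  (forall u : nat -> X, (forall n, u n.+1 <= u n) ->
         exists N, forall n, (N <= n)%N -> u n = u N) ->
  S x0 -> exists p, S p /\ forall z, S z -> z <= p -> z = p.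
Proof.
move=> dcc Sx0; apply: contrapT => Hn.
have H : forall x, exists z, S x -> [/\ S z, z <= x & z <> x].
  move=> x; have [Sx|nSx] := pselect (S x); last by exists x.
  apply: contrapT => Hx; apply: Hn; exists x; split=> // z Sz zx.
  by apply: contrapT => nzx; apply: Hx; exists z => _; split.
have [g Hg] := choice H.
pose u n := iter n g x0.
have Su : forall n, S (u n).
  by elim=> //= n IH; have [] := Hg _ IH.
have [N HN] := dcc u (fun n => let: And3 _ h _ := Hg _ (Su n) in h).
have := HN N.+1 (leqnSn N); have [_ _] := Hg _ (Su N).
by [].
Qed.

Lemma ii_i :
  [/\ (forall u : nat -> X, (forall n, u n.+1 <= u n) ->
         exists N, forall n, (N <= n)%N -> u n = u N),
      (exists F : seq X, [set: X] = \bigcup_(x in [set` F]) Kdown x) &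
      (forall x y : X, exists F : seq X,
         setI (Kdown x) (Kdown y) = \bigcup_(z in [set` F]) Kdown z)] ->
  compact [set: T].
Proof.
move=> [dcc [F0 cov] meet].
rewrite compact_ultra => F UF _.
have FF : Filter F by exact: _.
have [x0 _ Fx0] : exists2 x0, x0 \in F0 & F (Kdown x0).
  by apply: ultra_seq; rewrite -cov; apply: filterT.
have [p [Sp pmin]] := @dcc_min [set x | F (Kdown x)] x0 dcc Fx0.
exists p; split => //; apply: cvg_sub => A [x [->|->]] Ap.
  by apply: filterS Sp => y yp; exact: le_trans yp Ap.
have [Fx|//] := @in_ultra_setVsetC _ F (Kdown x) UF; exfalso; apply: Ap.
have [F1 e] := meet x p.
have Fu : F (Kdown x `&` Kdown p)%classic by apply: filterI.
rewrite e in Fu.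
have [z zin Fz] := @ultra_seq F UF _ Fu.
have : (Kdown x `&` Kdown p)%classic z by rewrite e; exists z => //; exact: lexx.
case=> zx zp; have ezp := pmin z Fz zp.
by rewrite -ezp.
Qed.
End S.

Theorem proposition3p12 (d : Order.disp_t) (X : porderType d) :
  compact [set: le_topology X] <->
  [/\ (forall u : nat -> X, (forall n, u n.+1 <= u n) ->
         exists N, forall n, (N <= n)%N -> u n = u N),
      (exists F : seq X, [set: X] = \bigcup_(x in [set` F]) Kdown x) &
      (forall x y : X, exists F : seq X,
         setI (Kdown x) (Kdown y) = \bigcup_(z in [set` F]) Kdown z)].
Proof.
split; last exact: ii_i.
move=> Hc; split.
- exact: compact_dcc.
- by apply: (@compact_down d X _ Hc).
- move=> x y; apply: compact_down.
    apply: (subclosed_compact _ Hc) => //.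
    by apply: closedI; apply: Kdown_closed.
  by move=> z w [zx zy] wz; split; apply: le_trans wz _.
Qed.
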